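(* Let $R,S\in GL(2,\mathbb{C})$ be diagonalizable matrices with eigenvalues $r_1,r_2\in S^1$ and $s_1,s_2\in S^1$ respectively, such that $r_1\ne r_2$, $s_1\ne s_2$ and $\{r_1,r_2\}\cap\{s_1,s_2\}=\emptyset$. Suppose that $1$ is an eigenvalue of $RS^{-1}$. Then the eigenspaces $E_{r_1},E_{r_2},E_{s_1},E_{s_2}$, regarded as points of $\mathbb{CP}^1$, are pairwise distinct and lie on a circle in $\mathbb{CP}^1$.
   Context: Here $S^1$ is the unit circle in $\mathbb{C}$, $E_{r}$ denotes the eigenspace (a complex line in $\mathbb{C}^2$, i.e. a point of $\mathbb{CP}^1$) for the eigenvalue $r$, and a circle in $\mathbb{CP}^1$ means the image of the real projective line $\mathbb{RP}^1\subset\mathbb{CP}^1$ under a Möbius transformation (a round circle or a line together with $\infty$ in an affine chart). *)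

(* Defs.v *)
From HB Require Import structures.
From mathcomp Require Import all_boot all_order all_algebra.
From mathcomp Require Import complex.
From mathcomp Require Import reals.
Set Implicit Arguments. Unset Strict Implicit. Unset Printing Implicit Defensive.
Import Order.TTheory GRing.Theory Num.Theory.
Local Open Scope ring_scope.

(* Points of CP^1 are complex lines of C^2.  Subspaces of C^2 are represented,
   as in mxalgebra, by row spaces of matrices; a column vector v is encoded
   by its transpose v^T (a row vector). *)

(* Column eigenspace E_a(A) = { v | A v = a v }, encoded by transposes:
   v^T *m A^T = a v^T, i.e. the (row) eigenspace of A^T. *)
Definition ceigenspace (R : realType) n (A : 'M[R[i]]_n) (a : R[i]) :=
  eigenspace A^T a.

Definition realvec (R : realType) (w : 'rV[R]_2) : 'rV[R[i]]_2 :=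
  map_mx (fun x => x%:C%C) w.

(* E lies on the image of RP^1 under the Mobius transformation M (M in GL(2,C)):
   E contains (hence, for a line, equals) M v for a nonzero real vector v.
   In transposed form: (M v)^T = v^T M^T. *)
Definition on_mobius_image_of_RP1 (R : realType) (M : 'M[R[i]]_2)
  (E : 'M[R[i]]_2) : Prop :=
  exists w : 'rV[R]_2, w != 0 /\ (realvec w *m M^T <= E)%MS.

Definition on_circle (R : realType) (Es : seq 'M[R[i]]_2) : Prop :=
  exists M : 'M[R[i]]_2, M \in unitmx /\
    forall E, E \in Es -> on_mobius_image_of_RP1 M E.

(* Main.v *)
Require Import Defs.
From HB Require Import structures.
From mathcomp Require Import all_boot all_order all_algebra.
From mathcomp Require Import complex.
From mathcomp Require Import reals.
From mathcomp Require Import ring lra.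
Import Order.TTheory GRing.Theory Num.Theory.
Local Open Scope ring_scope.

Section Gen.
Context {F : fieldType}.

Lemma char_poly_tr n (A : 'M[F]_n) : char_poly A^T = char_poly A.
Proof.
rewrite /char_poly -det_tr; congr (\det _).
apply/matrixP=> i j; rewrite !mxE eq_sym.
by case: (j == i).
Qed.

Lemma eig_tr n (A : 'M[F]_n) a : eigenvalue A^T a = eigenvalue A a.
Proof. by rewrite !eigenvalue_root_char char_poly_tr. Qed.

Lemma col2E (c u v : 'rV[F]_2) : c *m (col_mx u v : 'M_2) = c 0 0 *: u + c 0 1 *: v.
Proof.
apply/rowP=> j; rewrite !mxE big_ord_recl big_ord1 !mxE.
case: splitP => [i _|i /= Hi]; last by [].
case: splitP => [i' /= Hi'|i' _]; first by move: (ltn_ord i'); rewrite -Hi'.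
rewrite !ord1; congr (_ * _ + _ * _); congr (c _ _); exact/val_inj.
Qed.

Lemma indep_unit (u v : 'rV[F]_2) :
  (forall a b, a *: u + b *: v = 0 -> a = 0 /\ b = 0) -> (col_mx u v : 'M_2) \in unitmx.
Proof.
move=> H; rewrite -row_free_unit -kermx_eq0; apply: contraT => /rowV0Pn [c /sub_kermxP + cnz].
rewrite col2E => /H [h0 h1]; rewrite -(negbTE cnz); apply/eqP/rowP => j.
rewrite mxE; case: j => [[|[|//]]] ? .
  by rewrite -h0; congr (c _ _); apply/val_inj.
by rewrite -h1; congr (c _ _); apply/val_inj.
Qed.
Arguments indep_unit {u v}.

Lemma span2 (u v : 'rV[F]_2) : (col_mx u v : 'M_2) \in unitmx ->
  forall w, exists a b, w = a *: u + b *: v.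
Proof.
move=> U w; exists ((w *m invmx (col_mx u v : 'M_2)) 0 0), ((w *m invmx (col_mx u v : 'M_2)) 0 1).
by rewrite -col2E mulmxKV.
Qed.
Arguments span2 {u v}.


Lemma combM (a b : F) (v p : 'rV[F]_2) (M : 'M[F]_2) :
  (a *: v + b *: p) *m M = a *: (v *m M) + b *: (p *m M).
Proof. by rewrite mulmxDl -!scalemxAl. Qed.

Lemma scale_eq0 (a : F) (v : 'rV[F]_2) : v != 0 -> a *: v = 0 -> a = 0.
Proof. by move=> nz /eqP; rewrite scalemx_eq0 (negbTE nz) orbF => /eqP. Qed.
Arguments scale_eq0 {a v}.

Lemma indep_eig (M : 'M[F]_2) (v p : 'rV[F]_2) (r r' : F) :
  v *m M = r *: v -> p *m M = r' *: p -> v != 0 -> p != 0 -> r != r' ->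
  forall a b, a *: v + b *: p = 0 -> a = 0 /\ b = 0.
Proof.
move=> Hv Hp nv np nr a b h.
have hb : (b * (r' - r)) *: p = 0.
  have -> : (b * (r' - r)) *: p = (a *: v + b *: p) *m M - r *: (a *: v + b *: p).
    by rewrite combM Hv Hp; apply/rowP => j; rewrite !mxE; ring.
  by rewrite h mul0mx scaler0 subr0.
have /eqP := scale_eq0 np hb; rewrite mulf_eq0 subr_eq0 [r' == r]eq_sym (negbTE nr) orbF => /eqP b0.
split=> //; apply: (scale_eq0 nv); by rewrite -[RHS]h b0 scale0r addr0.
Qed.
Arguments indep_eig {M v p r r'}.

Lemma uniq2 (v p : 'rV[F]_2) :
  (forall a b, a *: v + b *: p = 0 -> a = 0 /\ b = 0) ->
  forall a b a' b', a *: v + b *: p = a' *: v + b' *: p -> a = a' /\ b = b'.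
Proof.
move=> H a b a' b' e.
have [] := H (a - a') (b - b').
  apply/rowP => j; move/rowP: e => /(_ j); rewrite !mxE => e.
  transitivity ((a * v 0 j + b * p 0 j) - (a' * v 0 j + b' * p 0 j)); first by ring.
  by rewrite e subrr.
by move=> /eqP; rewrite subr_eq0 => /eqP -> /eqP; rewrite subr_eq0 => /eqP ->.
Qed.
Arguments uniq2 {v p}.

Lemma no_common (Ar Br : 'M[F]_2) (v p q t : 'rV[F]_2) (r s r' s' : F) :
  v *m Ar = r *: v -> v *m Br = s *: v -> p *m Ar = r' *: p -> q *m Br = s' *: q ->
  t *m Ar = t *m Br ->
  v != 0 -> p != 0 -> q != 0 -> t != 0 -> r != r' -> s != s' -> r != s -> r' != s' -> False.
Proof.
move=> Hv Hvb Hp Hq Ht nv np nq nt rr ss rs rs'.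
have ind := indep_eig Hv Hp nv np rr.
have sp := span2 (indep_unit ind).
have un := uniq2 ind.
have [a [b et]] := sp t.
have [c [d ep]] := sp (p *m Br).
have [x [y eq]] := sp q.
have e1 : t *m Ar = (a * r) *: v + (b * r') *: p.
  by rewrite et combM Hv Hp; apply/rowP => j; rewrite !mxE; ring.
have e2 : t *m Br = (a * s + b * c) *: v + (b * d) *: p.
  by rewrite et combM Hvb ep; apply/rowP => j; rewrite !mxE; ring.
have e3 : q *m Br = (x * s + y * c) *: v + (y * d) *: p.
  by rewrite eq combM Hvb ep; apply/rowP => j; rewrite !mxE; ring.
have e4 : q *m Br = (s' * x) *: v + (s' * y) *: p.
  by rewrite Hq eq; apply/rowP => j; rewrite !mxE; ring.
have [f1 f2] : a * r = a * s + b * c /\ b * r' = b * d by apply: un; rewrite -e1 -e2.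
have [f3 f4] : x * s + y * c = s' * x /\ y * d = s' * y by apply: un; rewrite -e3 -e4.
have [b0|bn0] := eqVneq b 0.
  move: f1; rewrite b0 mul0r addr0 => /eqP; rewrite -subr_eq0 -mulrBr mulf_eq0 subr_eq0 (negbTE rs) orbF => /eqP a0.
  by move/negP: nt; apply; rewrite et a0 b0 !scale0r addr0.
have dr : d = r'.
  by apply: (mulfI bn0).
have y0 : y = 0.
  move: f4; rewrite dr => /eqP; rewrite [s' * y]mulrC -subr_eq0 -mulrBr mulf_eq0 subr_eq0 (negbTE rs') orbF => /eqP //.
have x0 : x = 0.
  move: f3; rewrite y0 mul0r addr0 => /eqP; rewrite [s' * x]mulrC -subr_eq0 -mulrBr mulf_eq0 subr_eq0 (negbTE ss) orbF => /eqP //.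
by move/negP: nq; apply; rewrite eq x0 y0 !scale0r addr0.
Qed.

End Gen.
Arguments scale_eq0 {F a v}.
Arguments indep_eig {F M v p r r'}.
Arguments uniq2 {F v p}.
Arguments span2 {F u v}.
Arguments indep_unit {F u v}.
Arguments no_common {F Ar Br v p q t r s r' s'}.

Lemma unit_conj (R : realType) (z : R[i]) : `|z| = 1 -> (z^*)%C = z^-1.
Proof.
case: z => a b; rewrite normc_def => /(congr1 (@complex.Re R)) /= h.
have h2 : a ^+ 2 + b ^+ 2 = 1.
  have : Num.sqrt (a ^+ 2 + b ^+ 2) ^+ 2 = 1 by rewrite h expr1n.
  by rewrite sqr_sqrtr // addr_ge0 // sqr_ge0.
rewrite /GRing.inv /= h2 !divr1.
by [].
Qed.

Lemma real_of_conj (R : realType) (z : R[i]) : (z^*)%C = z -> z = (complex.Re z)%:C%C.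
Proof.
case: z => a b /= [] h; congr Complex => /=; lra.
Qed.

Lemma unit_neq0 (R : realType) (z : R[i]) : `|z| = 1 -> z != 0.
Proof. by move=> h; apply/eqP => z0; move: h; rewrite z0 normr0 => /esym/eqP; rewrite oner_eq0. Qed.

Lemma cross_real (R : realType) (r1 r2 s1 s2 : R[i]) :
  `|r1| = 1 -> `|r2| = 1 -> `|s1| = 1 -> `|s2| = 1 ->
  r1 != s1 -> s2 != r2 ->
  let k := (s2 - r1) * (r2 - s1) / ((r1 - s1) * (s2 - r2)) in k = (complex.Re k)%:C%C.
Proof.
move=> h1 h2 h3 h4 d1 d2 k; apply: real_of_conj.
have n1 := @unit_neq0 R _ h1; have n2 := @unit_neq0 R _ h2; have n3 := @unit_neq0 R _ h3; have n4 := @unit_neq0 R _ h4.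
have d1' : r1 - s1 != 0 by rewrite subr_eq0.
have d2' : s2 - r2 != 0 by rewrite subr_eq0.
rewrite /k !(rmorphM, rmorphB, fmorphV) /= !unit_conj //.
field.
by rewrite !mulN1r !subr_eq0 n1 n2 n3 n4 d1 d2 (eq_sym r2) (eq_sym s1) d1 d2.
Qed.

Definition rv2 (R : realType) (x y : R) : 'rV[R]_2 := \row_(j < 2) (if j == 0 then x else y).
Arguments rv2 {R}.

Lemma realvec_rv2 (R : realType) (x y : R) (u v : 'rV[R[i]]_2) :
  realvec (rv2 x y) *m (col_mx u v : 'M_2) = x%:C%C *: u + y%:C%C *: v.
Proof. by rewrite col2E !mxE. Qed.

Lemma rv2_neq0 (R : realType) (y : R) : rv2 1 y != 0.
Proof. by apply/negP => /eqP /rowP /(_ 0); rewrite !mxE /= => /eqP; rewrite oner_eq0. Qed.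

Lemma rv2_neq0' (R : realType) : rv2 0 (1 : R) != 0.
Proof. by apply/negP => /eqP /rowP /(_ 1); rewrite !mxE /= => /eqP; rewrite oner_eq0. Qed.

Lemma eig_scale (F : fieldType) (M : 'M[F]_2) (q : 'rV[F]_2) s c :
  q *m M = s *: q -> (c *: q) *m M = s *: (c *: q).
Proof. by move=> h; rewrite -scalemxAl h !scalerA mulrC. Qed.

Lemma same_eig (F : fieldType) (M : 'M[F]_2) (v : 'rV[F]_2) a b :
  v != 0 -> v *m M = a *: v -> v *m M = b *: v -> a != b -> False.
Proof.
move=> nv h1 h2 ab.
have : (a - b) *: v = 0 by rewrite scalerBl -h1 -h2 subrr.
by move/(scale_eq0 nv)/eqP; rewrite subr_eq0 (negbTE ab).
Qed.

Lemma neq_sp (F : fieldType) (X Y : 'M[F]_2) (w : 'rV[F]_2) :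
  (w <= X)%MS -> ~~ (w <= Y)%MS -> ~~ (X == Y)%MS.
Proof. by move=> wX wY; apply/negP => /andP [XY _]; move/negP: wY; apply; apply: submx_trans XY. Qed.

Lemma memE (F : fieldType) (G : 'M[F]_2) (q X : 'rV[F]_2) s c :
  q *m G = s *: q -> X = c *: q -> X *m G = s *: X.
Proof. by move=> h ->; rewrite -scalemxAl h !scalerA mulrC. Qed.
Arguments memE {F G q X s} c.

Arguments same_eig {F M v a b}.
Arguments eig_scale {F M q s} c.
Arguments neq_sp {F X Y w}.

Theorem lemma22 (R : realType) (A B : 'M[R[i]]_2) (r1 r2 s1 s2 : R[i]) :
  A \in unitmx -> B \in unitmx ->
  diagonalizable A -> diagonalizable B ->
  eigenvalue A r1 -> eigenvalue A r2 -> eigenvalue B s1 -> eigenvalue B s2 ->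
  `|r1| = 1 -> `|r2| = 1 -> `|s1| = 1 -> `|s2| = 1 ->
  r1 != r2 -> s1 != s2 ->
  r1 != s1 -> r1 != s2 -> r2 != s1 -> r2 != s2 ->
  eigenvalue (A *m invmx B) 1 ->
  let E := [:: ceigenspace A r1; ceigenspace A r2;
               ceigenspace B s1; ceigenspace B s2] in
  (forall i j : 'I_4, i != j -> ~~ (E`_i == E`_j)%MS) /\ on_circle E.
Proof.
move=> UA UB _ _ eA1 eA2 eB1 eB2 n1 n2 n3 n4 rr ss d11 d12 d21 d22 e1 E.
have /eigenvalueP [p1 Hp1 np1] : eigenvalue A^T r1 by rewrite eig_tr.
have /eigenvalueP [p2 Hp2 np2] : eigenvalue A^T r2 by rewrite eig_tr.
have /eigenvalueP [q1 Hq1 nq1] : eigenvalue B^T s1 by rewrite eig_tr.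
have /eigenvalueP [q2 Hq2 nq2] : eigenvalue B^T s2 by rewrite eig_tr.
have /eigenvalueP [u Hu nu] : eigenvalue (A *m invmx B)^T 1 by rewrite eig_tr.
rewrite trmx_mul trmx_inv scale1r mulmxA in Hu.
have UBt : B^T \in unitmx by rewrite unitmx_tr.
set t := u *m invmx B^T.
have tB : t *m B^T = u by rewrite /t mulmxKV.
have Ht : t *m A^T = t *m B^T by rewrite tB.
have nt : t != 0.
  by apply/negP => /eqP t0; move/negP: nu; apply; rewrite -tB t0 mul0mx.
have ce11 (v : 'rV_2) : v != 0 -> v *m A^T = r1 *: v -> v *m B^T = s1 *: v -> False.
  move=> nv h1 h2; exact (no_common h1 h2 Hp2 Hq2 Ht nv np2 nq2 nt rr ss d11 d22).
have ce12 (v : 'rV_2) : v != 0 -> v *m A^T = r1 *: v -> v *m B^T = s2 *: v -> False.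
  move=> nv h1 h2; apply: (no_common h1 h2 Hp2 Hq1 Ht nv np2 nq1 nt rr _ d12 d21).
  by rewrite eq_sym.
have ce21 (v : 'rV_2) : v != 0 -> v *m A^T = r2 *: v -> v *m B^T = s1 *: v -> False.
  move=> nv h1 h2; apply: (no_common h1 h2 Hp1 Hq2 Ht nv np1 nq2 nt _ ss d21 d12).
  by rewrite eq_sym.
have ce22 (v : 'rV_2) : v != 0 -> v *m A^T = r2 *: v -> v *m B^T = s2 *: v -> False.
  move=> nv h1 h2; apply: (no_common h1 h2 Hp1 Hq1 Ht nv np1 nq1 nt _ _ d22 d11).
    by rewrite eq_sym.
  by rewrite eq_sym.
split.
  move=> i j; rewrite /E /ceigenspace.
  have T (Y : 'M[R[i]]_2) (w : 'rV[R[i]]_2) (G : 'M[R[i]]_2) (a : R[i]) : w *m G = a *: w -> ~~ (w <= Y)%MS ->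
    ~~ (eigenspace G a == Y)%MS.
    by move=> h; apply: neq_sp; apply/eigenspaceP.
  case: i => [[|[|[|[|//]]]] ?]; case: j => [[|[|[|[|//]]]] ?] //= _.
  - by apply: (T _ _ _ _ Hp1); apply/negP => /eigenspaceP h; apply: (same_eig np1 Hp1 h rr).
  - by apply: (T _ _ _ _ Hp1); apply/negP => /eigenspaceP h; apply: (ce11 p1 np1 Hp1 h).
  - by apply: (T _ _ _ _ Hp1); apply/negP => /eigenspaceP h; apply: (ce12 p1 np1 Hp1 h).
  - by apply: (T _ _ _ _ Hp2); apply/negP => /eigenspaceP h; apply: (same_eig np2 Hp2 h); rewrite eq_sym.
  - by apply: (T _ _ _ _ Hp2); apply/negP => /eigenspaceP h; apply: (ce21 p2 np2 Hp2 h).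
  - by apply: (T _ _ _ _ Hp2); apply/negP => /eigenspaceP h; apply: (ce22 p2 np2 Hp2 h).
  - by apply: (T _ _ _ _ Hq1); apply/negP => /eigenspaceP h; apply: (ce11 q1 nq1 h Hq1).
  - by apply: (T _ _ _ _ Hq1); apply/negP => /eigenspaceP h; apply: (ce21 q1 nq1 h Hq1).
  - by apply: (T _ _ _ _ Hq1); apply/negP => /eigenspaceP h; apply: (same_eig nq1 Hq1 h ss).
  - by apply: (T _ _ _ _ Hq2); apply/negP => /eigenspaceP h; apply: (ce12 q2 nq2 h Hq2).
  - by apply: (T _ _ _ _ Hq2); apply/negP => /eigenspaceP h; apply: (ce22 q2 nq2 h Hq2).
  - by apply: (T _ _ _ _ Hq2); apply/negP => /eigenspaceP h; apply: (same_eig nq2 Hq2 h); rewrite eq_sym.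
have indp := indep_eig Hp1 Hp2 np1 np2 rr.
have unp := uniq2 indp.
have [x1 [y1 eq1]] := span2 (indep_unit indp) q1.
have [x2 [y2 eq2]] := span2 (indep_unit indp) q2.
have indq := indep_eig Hq1 Hq2 nq1 nq2 ss.
have [a [b et]] := span2 (indep_unit indq) t.
have x1n : x1 != 0.
  apply/eqP => x0; apply: (ce21 q1 nq1 _ Hq1).
  by rewrite eq1 x0 !combM Hp1 Hp2; apply/rowP => j; rewrite !mxE; ring.
have y1n : y1 != 0.
  apply/eqP => y0; apply: (ce11 q1 nq1 _ Hq1).
  by rewrite eq1 y0 !combM Hp1 Hp2; apply/rowP => j; rewrite !mxE; ring.
have x2n : x2 != 0.
  apply/eqP => x0; apply: (ce22 q2 nq2 _ Hq2).
  by rewrite eq2 x0 !combM Hp1 Hp2; apply/rowP => j; rewrite !mxE; ring.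
have y2n : y2 != 0.
  apply/eqP => y0; apply: (ce12 q2 nq2 _ Hq2).
  by rewrite eq2 y0 !combM Hp1 Hp2; apply/rowP => j; rewrite !mxE; ring.
have LA : t *m A^T = (r1 * (a * x1 + b * x2)) *: p1 + (r2 * (a * y1 + b * y2)) *: p2.
  by rewrite et eq1 eq2 !combM Hp1 Hp2; apply/rowP => j; rewrite !mxE; ring.
have LB : t *m B^T = (a * s1 * x1 + b * s2 * x2) *: p1 + (a * s1 * y1 + b * s2 * y2) *: p2.
  by rewrite et combM Hq1 Hq2 eq1 eq2; apply/rowP => j; rewrite !mxE; ring.
have [f1 f2] := unp _ _ _ _ (etrans (esym LA) (etrans Ht LB)).
have g1 : a * x1 * (r1 - s1) = b * x2 * (s2 - r1).
  apply/eqP; rewrite -subr_eq0; apply/eqP.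
  transitivity (r1 * (a * x1 + b * x2) - (a * s1 * x1 + b * s2 * x2)); first by ring.
  by rewrite f1 subrr.
have g2 : a * y1 * (r2 - s1) = b * y2 * (s2 - r2).
  apply/eqP; rewrite -subr_eq0; apply/eqP.
  transitivity (r2 * (a * y1 + b * y2) - (a * s1 * y1 + b * s2 * y2)); first by ring.
  by rewrite f2 subrr.
have ds11 : r1 - s1 != 0 by rewrite subr_eq0.
have ds21 : s2 - r1 != 0 by rewrite subr_eq0 eq_sym.
have ds22 : s2 - r2 != 0 by rewrite subr_eq0 eq_sym.
have ds12 : r2 - s1 != 0 by rewrite subr_eq0.
have an : a != 0.
  apply/eqP => a0; move: g1; rewrite a0 !mul0r => /esym/eqP; rewrite !mulf_eq0 (negbTE x2n) (negbTE ds21) !orbF => /eqP b0.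
  by move/negP: nt; apply; rewrite et a0 b0 !scale0r addr0.
have bn : b != 0.
  apply/eqP => b0; move: g1; rewrite b0 !mul0r => /eqP; rewrite !mulf_eq0 (negbTE x1n) (negbTE ds11) !orbF => /eqP a0.
  by move/negP: an; apply; rewrite a0.
set k := (s2 - r1) * (r2 - s1) / ((r1 - s1) * (s2 - r2)).
have kreal : k = (complex.Re k)%:C%C by apply: cross_real; rewrite // eq_sym.
have ex1 : x1 = b * x2 * (s2 - r1) / (a * (r1 - s1)).
  by rewrite -g1; field; rewrite an ds11.
have ey2 : y2 = a * y1 * (r2 - s1) / (b * (s2 - r2)).
  by rewrite g2; field; rewrite bn ds22.
have hk : y2 * x1 / (y1 * x2) = k.
  rewrite /k {1}ex1 {1}ey2; field.
  by rewrite ds22 ds11 x2n y1n an bn.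
set mu := y1 / x1.
have mun : mu != 0 by rewrite /mu mulf_neq0 ?invr_eq0.
exists (col_mx p1 (mu *: p2) : 'M_2)^T; split.
  rewrite unitmx_tr; apply: indep_unit => al be h.
  have [] := indp al (be * mu); first by rewrite -scalerA.
  by move=> -> /eqP; rewrite mulf_eq0 (negbTE mun) orbF => /eqP.
move=> E0; rewrite !inE => /or4P [] /eqP ->; rewrite /on_mobius_image_of_RP1 trmxK.
- exists (rv2 1 0); split; first exact: rv2_neq0.
  rewrite realvec_rv2; apply/eigenspaceP; apply: (memE 1 Hp1).
  by apply/rowP => j; rewrite !mxE ?rmorph1 ?raddf0; ring.
- exists (rv2 0 1); split; first exact: rv2_neq0'.
  rewrite realvec_rv2; apply/eigenspaceP; apply: (memE mu Hp2).
  by apply/rowP => j; rewrite !mxE ?rmorph1 ?raddf0; ring.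
- exists (rv2 1 1); split; first exact: rv2_neq0.
  rewrite realvec_rv2; apply/eigenspaceP; apply: (memE x1^-1 Hq1).
  by rewrite eq1 /mu; apply/rowP => j; rewrite !mxE ?rmorph1 ?raddf0; field.
- exists (rv2 1 (complex.Re k)); split; first exact: rv2_neq0.
  rewrite realvec_rv2 -kreal -hk; apply/eigenspaceP; apply: (memE x2^-1 Hq2).
  rewrite eq2 /mu; apply/rowP => j; rewrite !mxE ?rmorph1 ?raddf0; field.
  by rewrite x1n y1n x2n.
Qed.
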